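(* For all $Q\in(0,1)$, $z>0$ and $y\in(0,1]$, $$\sum_{m\in\mathbb{Z}} Q^{\frac{m(m+1)}{2}}z^m=Z(Q,z,y)\prod_{i=1}^\infty\frac{1-Q^i}{1+(y-1)Q^i},$$ where $$Z(Q,z,y) = 1 + \sum_{\substack{L,R\geq0\\ L+R>0}}y^{L+R} \sum_{\substack{\ell_1,\dots,\ell_L\geq 1 \\ m_1,\dots,m_{R}\geq 1}}\prod_{j=1}^{L} \frac{Q^{\frac12 \ell_j(\ell_j-1)+j\ell_j+\ell_{j-1}(\ell_j+\cdots+\ell_{L})}z^{-\ell_j}}{1-Q^{\ell_j+\cdots + \ell_{L}}}\prod_{j=1}^{R}\frac{Q^{\frac12 m_j(m_j-1)+jm_j+m_{j-1}(m_{j}+\cdots+m_{R})}z^{m_j}}{1-Q^{m_{j}+\cdots+m_{R}}}\Big(\big(1-y^{-1}\big)Q^{\ell_1+\cdots + \ell_L}Q^{m_{1}+\cdots+m_{R}} + y^{-1}\Big),$$ with the conventions $\ell_0=-1$ and $m_0=0$.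
   Context: In the sum defining $Z(Q,z,y)$, $L$ and $R$ range over nonnegative integers with $L+R>0$, and for given $L,R$ the inner sum ranges over all tuples of positive integers $(\ell_1,\dots,\ell_L)$ and $(m_1,\dots,m_R)$; an empty product equals $1$ (so e.g. when $L=0$ the first product is $1$ and $\ell_1+\cdots+\ell_L=0$). *)

(* Defs.v *)
From HB Require Import structures.
From mathcomp Require Import all_boot all_order all_algebra.
From mathcomp Require Import all_classical all_reals all_analysis.
Set Implicit Arguments. Unset Strict Implicit. Unset Printing Implicit Defensive.
Import Order.TTheory GRing.Theory Num.Theory.
Import numFieldNormedType.Exports.
Local Open Scope classical_set_scope.
Local Open Scope ring_scope.

(* One of the two products in Z(Q,z,y).  [l] is the tuple (l_1,...,l_L)
   stored 0-based (l_{j+1} = nth 0 l j), [c0] is the convention for l_0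
   (-1 for the left product, 0 for the right one), [sgn] is the sign of the
   exponent of z (false: z^{-l_j}, true: z^{l_j}). *)
Definition side_prod (R : realType) (c0 : int) (sgn : bool) (Q z : R)
    (l : seq nat) : R :=
  \prod_(j < size l)
    (let lj := nth 0%N l j in
     let tailsum := sumn (drop j l) in
     let prev : int := if j == 0%N :> nat then c0 else (nth 0%N l j.-1)%:Z in
     let e : int := ((lj * (lj - 1)) %/ 2)%N%:Z + (j.+1 * lj)%N%:Z
                     + prev * tailsum%:Z in
     Q ^ e * z ^ (if sgn then lj%:Z else - lj%:Z) / (1 - Q ^+ tailsum)).

Definition Zindex : set (seq nat * seq nat) :=
  [set p | all (fun x => 0 < x)%N p.1 && all (fun x => 0 < x)%N p.2
           && (0 < size p.1 + size p.2)%N].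

Definition Zterm (R : realType) (Q z y : R) (p : seq nat * seq nat) : R :=
  y ^+ (size p.1 + size p.2) * side_prod (-1) false Q z p.1
    * side_prod 0 true Q z p.2
    * ((1 - y^-1) * Q ^+ sumn p.1 * Q ^+ sumn p.2 + y^-1).

(* Z(Q,z,y); all terms are nonnegative, so the (unordered) sum is taken in
   the extended reals. *)
Definition Zfun (R : realType) (Q z y : R) : \bar R :=
  (1%:E + \esum_(p in Zindex) (Zterm Q z y p)%:E)%E.

Definition theta_lhs (R : realType) (Q z : R) : \bar R :=
  \esum_(m in [set: int]) (Q ^ ((m * (m + 1)) %/ 2)%Z * z ^ m)%:E.

Definition prod_partial (R : realType) (Q y : R) (n : nat) : R :=
  \prod_(1 <= i < n.+1) ((1 - Q ^+ i) / (1 + (y - 1) * Q ^+ i)).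

(* Main.v *)
Require Import Defs.
From HB Require Import structures.
From mathcomp Require Import all_boot all_order all_algebra.
From mathcomp Require Import all_classical all_reals all_analysis.
From mathcomp Require Import ring lra.
Import Order.TTheory GRing.Theory Num.Theory.
Import numFieldNormedType.Exports.
Local Open Scope classical_set_scope.
Local Open Scope ring_scope.
From mathcomp Require Import zify.


Lemma tri_bin n : ((n * (n - 1)) %/ 2 = 'C(n, 2))%N.
Proof. by rewrite bin2 -divn2 subn1. Qed.

Definition sgx (sgn : bool) (n : nat) : int := if sgn then n%:Z else - n%:Z.

Lemma sp_cons (R : realType) (Q z : R) (c0 : int) sgn x l : Q != 0 ->
  side_prod c0 sgn Q z (x :: l) =
  Q ^ ('C(x, 2)%:Z + x%:Z + c0 * (x + sumn l)%N%:Z) * z ^ sgx sgn x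
    / (1 - Q ^+ (x + sumn l)) * (side_prod x%:Z sgn Q z l * Q ^+ sumn l).
Proof.
move=> Q0.
rewrite /side_prod /= big_ord_recl /= mul1n tri_bin.
congr (_ * _).
have -> : sumn l = (\sum_(j < size l) nth 0%N l j)%N.
  elim: l {c0} => [|a l IH]; first by rewrite big_ord0.
  by rewrite /= big_ord_recl /= IH.
rewrite -prodrXr -big_split /=; apply: eq_bigr => j _.
rewrite /bump /= add1n.
have H k n (a c : int) : Q ^ (a + (k.+1 * n)%N%:Z + c) = Q ^ (a + (k*n)%N%:Z + c) * Q ^+ n.
  have -> : a + (k.+1 * n)%N%:Z + c = (a + (k*n)%N%:Z + c) + n%:Z by rewrite mulSn PoszD; ring.
  by rewrite expfzDr.
case: j => [[|j] Hj]; rewrite /= add0n H; ring.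
Qed.
Lemma binS2 n : 'C(n.+1, 2) = ('C(n, 2) + n)%N.
Proof. by rewrite binS bin1. Qed.
Lemma bin2D a b : 'C(a + b, 2) = ('C(a, 2) + 'C(b, 2) + a * b)%N.
Proof.
elim: b => [|b IH]; first by rewrite addn0 bin0n muln0 !addn0.
by rewrite addnS !binS2 IH; lia.
Qed.

Fixpoint Vf {R : realType} (Q : R) (l : seq nat) : R :=
  if l is x :: l' then Q ^+ (x + sumn l') / (1 - Q ^+ (x + sumn l')) * Vf Q l'
  else 1.

Lemma sgxD sgn a b : sgx sgn (a + b) = sgx sgn a + sgx sgn b.
Proof. by case: sgn; rewrite /sgx PoszD // opprD. Qed.

Lemma sp_closed (R : realType) (Q z : R) (c0 : int) sgn l : Q != 0 -> z != 0 ->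
  side_prod c0 sgn Q z l =
  Q ^ (c0 * (sumn l)%:Z + 'C(sumn l, 2)%:Z) * z ^ sgx sgn (sumn l) * Vf Q l.
Proof.
move=> Q0 z0; elim: l c0 => [|x l IH] c0.
  by rewrite /side_prod big_ord0 /= bin0n mulr0 addr0 expr0z /sgx; case: sgn; rewrite ?oppr0 expr0z !mulr1.
rewrite sp_cons // IH /=.
have E : Q ^ (c0 * (x + sumn l)%N%:Z + 'C(x + sumn l, 2)%:Z) * Q ^+ (x + sumn l) = Q ^ ('C(x, 2)%:Z + x%:Z + c0 * (x + sumn l)%N%:Z) * Q ^ (x%:Z * (sumn l)%:Z + 'C(sumn l, 2)%:Z) * Q ^+ sumn l.
  rewrite !exprnP -!expfzDr //; congr (Q ^ _); rewrite bin2D; lia.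
rewrite sgxD (expfzDr _ _ z0).
move: E; set A := Q ^ _; set B := Q ^ _; set C := Q ^ _; move=> E.
set zx := z ^ _; set zl := z ^ _; set g := (1 - _)^-1.
transitivity ((A * Q ^+ (x + sumn l)) * zx * zl * g * Vf Q l); last by ring.
by rewrite E; ring.
Qed.

Set Implicit Arguments. Unset Strict Implicit.
Lemma esumZ (R : realType) (T : choiceType) (S : set T) (f : T -> \bar R) (r : R) :
  0 <= r -> (forall t, (0 <= f t)%E) ->
  \esum_(i in S) (r%:E * f i)%E = (r%:E * \esum_(i in S) f i)%E.
Proof.
move=> r0 f0; rewrite /esum -ereal_supZl //; last first.
  by apply/set0P; exists (\sum_(x \in set0) f x)%E; exists set0 => //; exact: fsets_set0.
rewrite image_comp; congr ereal_sup; apply: eq_imagel => A _ /=.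
by rewrite ge0_mule_fsumr.
Qed.

Definition gpos (l : seq nat) := all (fun x => 0 < x)%N l.
Arguments gpos : simpl never.
Lemma gpos_cons x l : gpos (x :: l) = (0 < x)%N && gpos l.
Proof. by []. Qed.
Definition fib (b : nat) : set (seq nat) := [set l | gpos l && (sumn l == b)].
Definition Ub (b : nat) : set (seq nat) := [set l | gpos l && (sumn l <= b)%N].
Definition fv {R : realType} (Q y : R) (l : seq nat) : R := y ^+ size l * Vf Q l.
Definition gg {R : realType} (Q y : R) (p : nat) : R := (1 + (y - 1) * Q ^+ p) / (1 - Q ^+ p).
Definition PP {R : realType} (Q y : R) (n : nat) : R := \prod_(1 <= p < n.+1) gg Q y p.
Definition EE {R : realType} (Q y : R) (b : nat) : R :=
  if b is b'.+1 then y * Q ^+ b / (1 - Q ^+ b) * PP Q y b' else 1.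

Lemma Vf_ge0 (R : realType) (Q : R) l : 0 <= Q -> Q <= 1 -> 0 <= Vf Q l.
Proof.
move=> Q0 Q1; elim: l => [|x l IH] //=.
apply: mulr_ge0 => //; apply: divr_ge0; first exact: exprn_ge0.
by rewrite subr_ge0 exprn_ile1.
Qed.

Lemma fv_ge0 (R : realType) (Q y : R) l : 0 <= Q -> Q <= 1 -> 0 <= y -> 0 <= fv Q y l.
Proof. by move=> *; apply: mulr_ge0; [exact: exprn_ge0| exact: Vf_ge0]. Qed.

Lemma gpos_sum0 l : gpos l -> sumn l = 0%N -> l = [::].
Proof. by case: l => [|x l] //; rewrite gpos_cons /= => /andP[]; lia. Qed.

Lemma Ub0 : Ub 0 = [set [::]].
Proof.
apply/seteqP; split => l /=; last by move->.
by move=> /andP[H H2]; apply: gpos_sum0 H _; lia.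
Qed.

Lemma fib0 : fib 0 = [set [::]].
Proof.
apply/seteqP; split => l /=; last by move->.
by move=> /andP[H H2]; apply: gpos_sum0 H _; lia.
Qed.

Lemma fibS b : fib b.+1 = (fun l => (b.+1 - sumn l)%N :: l) @` Ub b.
Proof.
rewrite /fib /Ub; apply/seteqP; split => l /=.
  case: l => [|x l] /=; first by [].
  rewrite gpos_cons => /andP[/andP[x0 pl] /eqP s]; exists l; first by rewrite /= pl /=; lia.
  by congr (_ :: _); lia.
move=> [l' /andP[pl sl] <-] /=; rewrite gpos_cons pl /=.
apply/andP; split; lia.
Qed.

Lemma UbS_in b : Ub b.+1 `&` Ub b = Ub b.
Proof.
rewrite /Ub; apply/seteqP; split => l /=; first by case.
by move=> /andP[pl sl]; split => //; rewrite pl /=; lia.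
Qed.

Lemma UbS_out b : Ub b.+1 `&` ~` Ub b = fib b.+1.
Proof.
rewrite /Ub /fib; apply/seteqP; split => l /=.
  move=> [/andP[pl sl] /negP]; rewrite pl /= => H; apply/eqP; lia.
move=> /andP[pl /eqP sl]; rewrite pl /=; split; lia.
Qed.

Lemma expQ_lt1 (R : realType) (Q : R) n : 0 < Q -> Q < 1 -> Q ^+ n.+1 < 1.
Proof. by move=> Q0 Q1; rewrite exprn_ilt1 // ltW. Qed.

Lemma oneQ_neq0 (R : realType) (Q : R) n : 0 < Q -> Q < 1 -> 1 - Q ^+ n.+1 != 0.
Proof. by move=> Q0 Q1; rewrite subr_eq0 eq_sym lt_eqF // expQ_lt1. Qed.

Lemma oneQ_gt0 (R : realType) (Q : R) n : 0 < Q -> Q < 1 -> 0 < 1 - Q ^+ n.+1.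
Proof. by move=> Q0 Q1; rewrite subr_gt0 expQ_lt1. Qed.

Lemma PPS (R : realType) (Q y : R) n : PP Q y n.+1 = PP Q y n * gg Q y n.+1.
Proof. by rewrite /PP big_nat_recr. Qed.

Lemma PP0 (R : realType) (Q y : R) : PP Q y 0 = 1.
Proof. by rewrite /PP big_geq. Qed.

Lemma esum_fibU (R : realType) (Q y : R) b : 0 < Q -> Q < 1 -> 0 < y ->
  \esum_(l in Ub b) (fv Q y l)%:E = (PP Q y b)%:E /\
  \esum_(l in fib b) (fv Q y l)%:E = (EE Q y b)%:E.
Proof.
move=> Q0 Q1 y0.
have fv0 l : (0 <= (fv Q y l)%:E)%E by rewrite lee_fin fv_ge0 ?ltW.
elim: b => [|b [IHU IHf]].
  by rewrite Ub0 fib0 !esum_set1 // /fv /= PP0 expr0 mulr1.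
have Hf : \esum_(l in fib b.+1) (fv Q y l)%:E = (EE Q y b.+1)%:E.
  rewrite fibS esum_image; last by move=> l1 l2 _ _ [].
  rewrite (eq_esum (b := fun l => ((y * Q ^+ b.+1 / (1 - Q ^+ b.+1))%:E * (fv Q y l)%:E)%E)); last first.
    move=> l /andP[_ sl]; rewrite -EFinM /fv /= subnK; last lia.
    by rewrite exprS; congr (_%:E); ring.
  rewrite (@esumZ _ _ _ (fun l => (fv Q y l)%:E)) //; last first.
    apply: mulr_ge0; first by rewrite mulr_ge0 ?exprn_ge0 ?ltW.
    by rewrite invr_ge0 subr_ge0 exprn_ile1 // ltW.
  by rewrite IHU /EE -EFinM.
split => //.
rewrite (esumID (Ub b)) // UbS_in UbS_out IHU Hf -EFinD; congr EFin.
rewrite PPS /EE /gg.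
have H := oneQ_neq0 b Q0 Q1.
by field.
Qed.

Definition hh {R : realType} (Q y : R) (s : nat) : R := (1 - y^-1) * Q ^+ s + y^-1.
Definition Phi {R : realType} (Q z y : R) (a b : nat) : R :=
  Q ^ (- a%:Z + 'C(a, 2)%:Z) * z ^ (- a%:Z) * (Q ^ ('C(b, 2)%:Z) * z ^ (b%:Z)) * hh Q y (a + b).

Lemma Zterm_eq (R : realType) (Q z y : R) p : Q != 0 -> z != 0 ->
  Zterm Q z y p = Phi Q z y (sumn p.1) (sumn p.2) * fv Q y p.1 * fv Q y p.2.
Proof.
move=> Q0 z0; rewrite /Zterm !sp_closed // /Phi /hh /fv /sgx mulN1r mul0r add0r exprD.
rewrite (exprD Q).
move: (Q ^ (- (sumn p.1)%:Z + _)) (z ^ (- (sumn p.1)%:Z)) (Q ^ ('C(sumn p.2, 2))%:Z) (z ^ (sumn p.2)%:Z) => A B C D; move: (y^-1) (y ^+ size p.1) (y ^+ size p.2) (Q ^+ sumn p.1) (Q ^+ sumn p.2) (Vf Q p.1) (Vf Q p.2) => E F G H I J K; ring.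
Qed.

Lemma hh_ge1 (R : realType) (Q y : R) s : 0 < Q -> Q < 1 -> 0 < y -> y <= 1 -> 1 <= hh Q y s.
Proof.
move=> Q0 Q1 y0 y1; rewrite /hh.
have h1 : 1 - y^-1 <= 0 by rewrite subr_le0 invf_ge1.
have h2 : Q ^+ s <= 1 by rewrite exprn_ile1 // ltW.
have : (1 - y^-1) <= (1 - y^-1) * Q ^+ s.
  by rewrite -[X in X <= _]mulr1 ler_wnM2l.
lra.
Qed.

Lemma Phi_ge0 (R : realType) (Q z y : R) a b : 0 < Q -> Q < 1 -> 0 < z -> 0 < y -> y <= 1 -> 0 <= Phi Q z y a b.
Proof.
move=> Q0 Q1 z0 y0 y1; rewrite /Phi.
apply: mulr_ge0; last by apply: le_trans (hh_ge1 _ Q0 Q1 y0 y1).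
by rewrite !mulr_ge0 // exprz_ge0 // ltW.
Qed.

Definition ZI0 : set (seq nat * seq nat) := [set p | gpos p.1 && gpos p.2].

Lemma Zterm_ge0 (R : realType) (Q z y : R) p : 0 < Q -> Q < 1 -> 0 < z -> 0 < y -> y <= 1 ->
  0 <= Zterm Q z y p.
Proof.
move=> Q0 Q1 z0 y0 y1; rewrite Zterm_eq ?gt_eqF //.
apply: mulr_ge0; first apply: mulr_ge0; first exact: Phi_ge0.
  all: by apply: fv_ge0; rewrite ltW.
Qed.

Lemma Zfun_ZI0 (R : realType) (Q z y : R) : 0 < Q -> Q < 1 -> 0 < z -> 0 < y -> y <= 1 ->
  Zfun Q z y = \esum_(p in ZI0) (Zterm Q z y p)%:E.
Proof.
move=> Q0 Q1 z0 y0 y1.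
rewrite /Zfun (esumID [set ([::],[::])] ZI0); last by move=> p _; rewrite lee_fin Zterm_ge0.
have -> : ZI0 `&` [set ([::], [::])] = [set ([::],[::])].
  by apply/seteqP; split => p /=; [case| move=> ->].
have -> : ZI0 `&` ~` [set ([::], [::])] = Zindex.
  apply/seteqP; split => -[l m] /=; rewrite /ZI0 /Zindex /=.
    move=> [/andP[pl pm] H]; rewrite /gpos in pl pm; rewrite pl pm /=.
    by case: l m H {pl pm} => [|x l] [|w m].
  move=> /andP[/andP[pl pm] s]; split; first by rewrite /gpos pl pm.
  by case: l m s {pl pm} => [|x l] [|w m].
rewrite esum_set1; last by rewrite lee_fin Zterm_ge0.
congr (_ + _)%E; congr (_%:E).
by rewrite /Zterm /side_prod /= !big_ord0 expr0 !mulr1 !mul1r addrNK.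
Qed.

Lemma esum_ZI0 (R : realType) (Q z y : R) : 0 < Q -> Q < 1 -> 0 < z -> 0 < y -> y <= 1 ->
  \esum_(p in ZI0) (Zterm Q z y p)%:E =
  \esum_(ab in [set: nat * nat]) (Phi Q z y ab.1 ab.2 * EE Q y ab.1 * EE Q y ab.2)%:E.
Proof.
move=> Q0 Q1 z0 y0 y1.
have fv0 l : 0 <= fv Q y l by rewrite fv_ge0 ?ltW.
have Ph0 a b : 0 <= Phi Q z y a b by exact: Phi_ge0.
rewrite (reindex_esum ([set: nat * nat] `*`` (fun ab => fib ab.1 `*`` (fun _ => fib ab.2))) ZI0 snd); last first.
  split.
  - move=> [[a b] [l m]] /=; rewrite /fib /ZI0 /= => -[_ []] /andP[pl _] /andP[pm _].
    by rewrite pl pm.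
  - move=> [[a b] [l m]] [[a' b'] [l' m']] /=; rewrite /fib /= !inE /=.
    move=> -[_ []] /andP[_ /eqP sl] /andP[_ /eqP sm].
    move=> -[_ []] /andP[_ /eqP sl'] /andP[_ /eqP sm'] [El Em].
    by rewrite -sl -sm -sl' -sm' El Em.
  - move=> [l m]; rewrite /ZI0 /= => /andP[pl pm]; exists ((sumn l, sumn m), (l, m)) => //=.
    by split => //; split; rewrite /fib /= ?pl ?pm eqxx.
rewrite -(@esum_esum R _ _ [set: nat * nat] (fun ab => fib ab.1 `*`` (fun _ => fib ab.2)) (fun _ p => (Zterm Q z y p)%:E)); last by move=> ab p _ _; rewrite lee_fin Zterm_ge0.
apply: eq_esum => -[a b] _ /=.
rewrite -(@esum_esum R _ _ (fib a) (fun _ => fib b) (fun l m => (Zterm Q z y (l, m))%:E)) /=; last by move=> l m _ _; rewrite lee_fin Zterm_ge0.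
have Hb := (esum_fibU b Q0 Q1 y0).2.
have Ha := (esum_fibU a Q0 Q1 y0).2.
transitivity (\esum_(l in fib a) ((Phi Q z y a b * fv Q y l)%:E * (EE Q y b)%:E))%E.
  apply: eq_esum => l /andP[_ /eqP sl].
  rewrite -Hb -(@esumZ _ _ _ (fun m => (fv Q y m)%:E)); last 2 first.
  - exact: mulr_ge0.
  - by move=> m; rewrite lee_fin fv0.
  apply: eq_esum => m /andP[_ /eqP sm].
  by rewrite Zterm_eq ?gt_eqF // /= sl sm.
transitivity (\esum_(l in fib a) ((Phi Q z y a b * EE Q y b)%:E * (fv Q y l)%:E))%E.
  by apply: eq_esum => l _; rewrite -!EFinM; congr (_%:E); ring.
rewrite (@esumZ _ _ _ (fun m => (fv Q y m)%:E)); last 2 first.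
- apply: mulr_ge0 => //; rewrite -lee_fin -Hb; by apply: esum_ge0 => m _; rewrite lee_fin fv0.
- by move=> m; rewrite lee_fin.
by rewrite Ha -EFinM; congr (_%:E); ring.
Qed.

Definition ww {R : realType} (Q y : R) (k n : nat) : R :=
  if k is k'.+1 then
    y * Q ^+ (k'.+1 * (k'.+1 + n)) * PP Q y k' * PP Q y (k' + n) *
    (1 + (y - 1) * Q ^+ (k'.+1 + k'.+1 + n)) / ((1 - Q ^+ k'.+1) * (1 - Q ^+ (k'.+1 + n)))
  else PP Q y n.

Definition HH {R : realType} (Q y : R) (k n : nat) : R :=
  if k is k'.+1 then
    y * Q ^+ (k'.+1 * (k'.+1 + n)) * PP Q y k' * PP Q y (k' + n) / (1 - Q ^+ (k'.+1 + n))
  else 0.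

Lemma alg_key (R : realType) (y Q A N X P1 P2 : R) : 1 - A != 0 -> 1 - A * N != 0 -> 1 - A * N * Q != 0 ->
  y*X*P1*P2*(1+(y-1)*(A*A*N))/((1-A)*(1-A*N)) + y*(X*(A*A*N)*Q)*(P1*((1+(y-1)*A)/(1-A)))*(P2*((1+(y-1)*(A*N))/(1-A*N)))/(1-A*N*Q)
  = y*(X*A)*P1*(P2*((1+(y-1)*(A*N))/(1-A*N)))*(1+(y-1)*(A*A*N*Q))/((1-A)*(1-A*N*Q)) + y*X*P1*P2/(1-A*N).
Proof. by move=> h1 h2 h3; field; rewrite h1 h2 h3. Qed.

Lemma ww_HH (R : realType) (Q y : R) k n : 0 < Q -> Q < 1 ->
  ww Q y k n + HH Q y k.+1 n = ww Q y k n.+1 + HH Q y k n.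
Proof.
move=> Q0 Q1.
case: k => [|k] /=.
  rewrite mul1n add0n add1n PP0 PPS /gg addr0.
  have H := oneQ_neq0 n Q0 Q1; field; exact: H.
have p1 : PP Q y (k.+1 + n) = PP Q y (k + n) * gg Q y (k.+1 + n) by rewrite addSn PPS.
have p2 : PP Q y (k + n.+1) = PP Q y (k + n) * gg Q y (k.+1 + n) by rewrite addnS PPS addSn.
rewrite (PPS Q y k) p1 p2 /gg.
have e1 : Q ^+ (k.+2 * (k.+2 + n)) = Q ^+ (k.+1 * (k.+1 + n)) * (Q ^+ k.+1 * Q ^+ k.+1 * Q ^+ n) * Q.
  by rewrite -!exprD -exprSr; congr (Q ^+ _); ring.
have e2 : Q ^+ (k.+1 * (k.+1 + n.+1)) = Q ^+ (k.+1 * (k.+1 + n)) * Q ^+ k.+1.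
  by rewrite -!exprD; congr (Q ^+ _); ring.
have e3 : Q ^+ (k.+1 + n) = Q ^+ k.+1 * Q ^+ n by rewrite exprD.
have e3' : Q ^+ (k + n).+1 = Q ^+ k.+1 * Q ^+ n by rewrite -exprD addSn.
have e4 : Q ^+ (k.+1 + k.+1 + n) = Q ^+ k.+1 * Q ^+ k.+1 * Q ^+ n by rewrite !exprD.
have e5 : Q ^+ (k.+1 + n.+1) = Q ^+ k.+1 * Q ^+ n * Q by rewrite addnS exprS exprD; ring.
have e6 : Q ^+ (k.+2 + n) = Q ^+ k.+1 * Q ^+ n * Q by rewrite addSn exprS exprD; ring.
have e7 : Q ^+ (k.+1 + k.+1 + n.+1) = Q ^+ k.+1 * Q ^+ k.+1 * Q ^+ n * Q by rewrite addnS exprS !exprD; ring.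
rewrite e1 e2 e7 e4 e5 e6 e3.
have h1 : 1 - Q ^+ k.+1 != 0 by exact: oneQ_neq0.
have h2 : 1 - Q ^+ k.+1 * Q ^+ n != 0 by rewrite -e3 addSn oneQ_neq0.
have h3 : 1 - Q ^+ k.+1 * Q ^+ n * Q != 0 by rewrite -e5 addnS oneQ_neq0.
exact: alg_key.
Qed.

Lemma nneseries_le_cst (R : realType) (f : nat -> R) (M : R) :
  (forall n, 0 <= f n) -> (forall N, \sum_(0 <= k < N) f k <= M) ->
  (\sum_(k <oo) (f k)%:E <= M%:E)%E.
Proof.
move=> f0 fM; apply: lime_le.
  by apply: is_cvg_nneseries => n _ _; rewrite lee_fin.
by apply: nearW => N; rewrite /= sumEFin lee_fin.
Qed.

Lemma geo_eq (R : realType) (Q : R) N : Q != 1 -> \sum_(0 <= k < N) Q ^+ k = (1 - Q ^+ N) / (1 - Q).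
Proof.
move=> Q1; have h : 1 - Q != 0 by rewrite subr_eq0 eq_sym.
elim: N => [|N IH]; first by rewrite big_geq // expr0 subrr mul0r.
by rewrite big_nat_recr //= IH exprS; field.
Qed.

Lemma geo_le (R : realType) (Q : R) N : 0 <= Q -> Q < 1 -> \sum_(0 <= k < N) Q ^+ k <= (1 - Q)^-1.
Proof.
move=> Q0 Q1; rewrite geo_eq ?lt_eqF //.
rewrite ler_pdivrMr ?subr_gt0 // mulVf ?subr_eq0 ?gt_eqF //.
by rewrite lerBlDr lerDl exprn_ge0.
Qed.

Section Bounds.
Variables (R : realType) (Q y : R).
Hypotheses (Q0 : 0 < Q) (Q1 : Q < 1) (y0 : 0 < y) (y1 : y <= 1).

Let Qle1 n : Q ^+ n <= 1.
Proof. by rewrite exprn_ile1 // ltW. Qed.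
Let Qge0 n : 0 <= Q ^+ n.
Proof. by rewrite exprn_ge0 // ltW. Qed.
Let Qmono m n : (n <= m)%N -> Q ^+ m <= Q ^+ n.
Proof. by move=> h; apply: ler_wiXn2l => //; rewrite ltW. Qed.

Lemma num_ge0 s : 0 <= 1 + (y - 1) * Q ^+ s.
Proof. have := Qle1 s; have := Qge0 s; move: (Q ^+ s) => t h1 h2; have := mulr_ge0 (ltW y0) h1; lra. Qed.

Lemma num_le1 s : 1 + (y - 1) * Q ^+ s <= 1.
Proof. have := Qle1 s; have := Qge0 s; move: (Q ^+ s) => t h1 h2; have : 0 <= t * (1 - y) by rewrite mulr_ge0 // subr_ge0. lra. Qed.

Lemma den_ge0 s : 0 <= 1 - Q ^+ s.
Proof. by rewrite subr_ge0. Qed.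

Lemma invden_le s : (1 - Q ^+ s.+1)^-1 <= (1 - Q)^-1.
Proof.
rewrite lef_pV2 ?posrE ?subr_gt0 ?expQ_lt1 //.
by rewrite lerB // -[X in _ <= X]expr1 Qmono.
Qed.

Lemma gg_ge0 p : 0 <= gg Q y p.
Proof. by rewrite /gg divr_ge0 ?num_ge0 ?den_ge0. Qed.

Lemma gg_le p : gg Q y p <= 1 + Q ^+ p / (1 - Q).
Proof.
case: p => [|p].
  rewrite /gg expr0 subrr invr0 mulr0.
  by rewrite addr_ge0 // divr_ge0 // subr_ge0 ltW.
rewrite /gg.
have h1 := oneQ_gt0 p Q0 Q1.
have h2 : Q ^+ p.+1 <= Q by rewrite -[X in _ <= X]expr1 Qmono.
have h3 : 0 < 1 - Q by rewrite subr_gt0.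
rewrite ler_pdivrMr //.
have hu : Q ^+ p.+1 / (1 - Q) * (1 - Q) = Q ^+ p.+1 by rewrite mulfVK // gt_eqF.
have hu0 : 0 <= Q ^+ p.+1 / (1 - Q) by rewrite divr_ge0 // ltW.
move: hu hu0 h2 (Qge0 p.+1); move: (Q ^+ p.+1 / (1 - Q)) => u; move: (Q ^+ p.+1) => t hu hu0 h2 ht.
have : 0 <= u * (Q - t) by rewrite mulr_ge0 // subr_ge0.
have : 0 <= t * (1 - y) by rewrite mulr_ge0 // subr_ge0.
nra.
Qed.

Definition Bd := expR ((1 - Q)^-1 * (1 - Q)^-1).

Lemma PP_ge0 n : 0 <= PP Q y n.
Proof. by rewrite /PP prodr_ge0 // => p _; exact: gg_ge0. Qed.

Lemma PP_le n : PP Q y n <= Bd.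
Proof.
apply: (@le_trans _ _ (\prod_(1 <= p < n.+1) expR (Q ^+ p / (1 - Q)))).
  apply: ler_prod => p _; rewrite gg_ge0 /=.
  exact: le_trans (gg_le p) (expR_ge1Dx _).
rewrite -expR_sum ler_expR -mulr_suml.
have h3 : 0 < 1 - Q by rewrite subr_gt0.
rewrite ler_pM2r ?invr_gt0 //.
apply: le_trans (geo_le n.+1 (ltW Q0) Q1).
rewrite [X in _ <= X](big_ltn (ltn0Sn n)) lerDr.
exact: Qge0.
Qed.

Lemma Bd_ge0 : 0 <= Bd.
Proof. exact: le_trans (PP_ge0 0) (PP_le 0). Qed.

End Bounds.

Section Tseries.
Variables (R : realType) (Q y : R).
Hypotheses (Q0 : 0 < Q) (Q1 : Q < 1) (y0 : 0 < y) (y1 : y <= 1).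

Let Qge0 n : 0 <= Q ^+ n.
Proof. by rewrite exprn_ge0 // ltW. Qed.
Let Qmono m n : (n <= m)%N -> Q ^+ m <= Q ^+ n.
Proof. by move=> h; apply: ler_wiXn2l => //; rewrite ltW. Qed.
Let h1Q : 0 < 1 - Q.
Proof. by rewrite subr_gt0. Qed.
Let B := Bd Q.
Let B0 : 0 <= B.
Proof. by apply: (@Bd_ge0 R Q y). Qed.
Let PPle n : PP Q y n <= B.
Proof. by apply: PP_le. Qed.
Let PP0 n : 0 <= PP Q y n.
Proof. by apply: PP_ge0. Qed.

Lemma ww_ge0 k n : 0 <= ww Q y k n.
Proof.
case: k => [|k] //=; apply: divr_ge0.
  by rewrite !mulr_ge0 ?Qge0 ?PP0 ?num_ge0 ?ltW.
by rewrite mulr_ge0 ?den_ge0.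
Qed.

Lemma HH_ge0 k n : 0 <= HH Q y k n.
Proof.
case: k => [|k] //=; apply: divr_ge0; last exact: den_ge0.
by rewrite !mulr_ge0 ?Qge0 ?PP0 ?ltW.
Qed.

Definition C1 := B * B / (1 - Q).
Definition C2 := B * B / ((1 - Q) * (1 - Q)).

Let yge0 : 0 <= y. Proof. exact: ltW. Qed.
Ltac gez := rewrite ?mulr_ge0 ?Qge0 ?PP0 ?yge0 ?invr_ge0 ?mulr_ge0 ?den_ge0 ?num_ge0 //.

Lemma HH_le k n : HH Q y k n <= C1 * Q ^+ k.
Proof.
case: k => [|k] /=; first by rewrite /C1 mulr_ge0 // divr_ge0 ?mulr_ge0 // ltW.
have -> : C1 * Q ^+ k.+1 = 1 * Q ^+ k.+1 * B * B * (1 - Q)^-1 by rewrite /C1; ring.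
apply: ler_pM; gez; last by rewrite addSn; apply: invden_le.
apply: ler_pM; gez.
apply: ler_pM; gez.
apply: ler_pM; gez.
by apply: Qmono; rewrite mulSn; lia.
Qed.

Lemma ww_le k n : ww Q y k.+1 n <= C2 * Q ^+ n * Q ^+ k.
Proof.
rewrite /=.
have -> : C2 * Q ^+ n * Q ^+ k = 1 * Q ^+ (n + k) * B * B * 1 * ((1 - Q)^-1 * (1 - Q)^-1).
  by rewrite /C2 exprD invfM; ring.
apply: ler_pM; gez; last first.
  rewrite invfM; apply: ler_pM; gez; first exact: invden_le.
  by rewrite addSn; apply: invden_le.
apply: ler_pM; gez; last exact: num_le1.
apply: ler_pM; gez.
apply: ler_pM; gez.
apply: ler_pM; gez.
by apply: Qmono; rewrite mulSn; lia.
Qed.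

End Tseries.

Section TT.
Variables (R : realType) (Q y : R).
Hypotheses (Q0 : 0 < Q) (Q1 : Q < 1) (y0 : 0 < y) (y1 : y <= 1).

Definition Ts n := (\sum_(k <oo) (ww Q y k n)%:E)%E.

Let wge0 k n : (0 <= (ww Q y k n)%:E)%E.
Proof. by rewrite lee_fin; apply: ww_ge0. Qed.
Let Hge0 k n : (0 <= (HH Q y k n)%:E)%E.
Proof. by rewrite lee_fin; apply: HH_ge0. Qed.
Let Qge0 n : 0 <= Q ^+ n.
Proof. by rewrite exprn_ge0 // ltW. Qed.
Let h1Q : 0 < 1 - Q.
Proof. by rewrite subr_gt0. Qed.
Let B0 : 0 <= Bd Q.
Proof. by apply: (@Bd_ge0 R Q y). Qed.
Let C1ge0 : 0 <= C1 Q.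
Proof. by rewrite /C1 divr_ge0 ?mulr_ge0 // ltW. Qed.
Let C2ge0 : 0 <= C2 Q.
Proof. by rewrite /C2 divr_ge0 ?mulr_ge0 // ltW. Qed.

Lemma HHsum_le n : (\sum_(k <oo) (HH Q y k n)%:E <= (C1 Q * (1 - Q)^-1)%:E)%E.
Proof.
apply: nneseries_le_cst => [k|N]; first by apply: HH_ge0.
apply: (@le_trans _ _ (\sum_(0 <= k < N) C1 Q * Q ^+ k)).
  by apply: ler_sum => k _; apply: HH_le.
by rewrite -mulr_sumr ler_wpM2l // geo_le // ltW.
Qed.

Lemma T_step n : Ts n.+1 = Ts n.
Proof.
have e : (\sum_(k <oo) ((ww Q y k n)%:E + (HH Q y k.+1 n)%:E) =
          \sum_(k <oo) ((ww Q y k n.+1)%:E + (HH Q y k n)%:E))%E.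
  by apply: eq_eseriesr => k _; rewrite -!EFinD ww_HH.
rewrite !nneseriesD // in e.
have sh : (\sum_(k <oo) (HH Q y k.+1 n)%:E = \sum_(k <oo) (HH Q y k n)%:E)%E.
  rewrite [RHS]nneseries_recl // /= add0e.
  rewrite -(@nneseries_addn R (fun k => (HH Q y k n)%:E) 1) //.
  by apply: eq_eseriesr => k _; rewrite addn1.
rewrite sh in e.
have fin : (\sum_(k <oo) (HH Q y k n)%:E)%E \is a fin_num.
  rewrite ge0_fin_numE; last exact: nneseries_ge0.
  exact: le_lt_trans (HHsum_le n) (ltry _).
by rewrite /Ts -[LHS](addeK _ fin) -e addeK.
Qed.

Lemma Ts_const n : Ts n = Ts 0.
Proof. by elim: n => [|n IH] //; rewrite T_step. Qed.

Lemma Ts_split n : Ts n = ((PP Q y n)%:E + \sum_(k <oo) (ww Q y k.+1 n)%:E)%E.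
Proof.
rewrite /Ts nneseries_recl //=.
rewrite -(@nneseries_addn R (fun k => (ww Q y k n)%:E) 1) //.
by congr (_ + _)%E; apply: eq_eseriesr => k _; rewrite addn1.
Qed.

Lemma T_lb n : ((PP Q y n)%:E <= Ts n)%E.
Proof. by rewrite Ts_split leeDl // nneseries_ge0. Qed.

Lemma T_ub n : (Ts n <= (PP Q y n + C2 Q * Q ^+ n * (1 - Q)^-1)%:E)%E.
Proof.
rewrite Ts_split EFinD leeD2l //.
apply: (@nneseries_le_cst R (fun k => ww Q y k.+1 n)) => [k|N]; first by apply: ww_ge0.
apply: (@le_trans _ _ (\sum_(0 <= k < N) C2 Q * Q ^+ n * Q ^+ k)).
  by apply: ler_sum => k _; apply: ww_le.
rewrite -mulr_sumr; apply: ler_wpM2l; first by rewrite mulr_ge0.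
by apply: geo_le => //; rewrite ltW.
Qed.

Definition T0 := fine (Ts 0).

Lemma Ts_fin : Ts 0 = T0%:E.
Proof.
rewrite /T0 fineK // ge0_fin_numE; last by rewrite /Ts nneseries_ge0.
exact: le_lt_trans (T_ub 0) (ltry _).
Qed.

Lemma T0_ge1 : 1 <= T0.
Proof. by rewrite -lee_fin -Ts_fin -(PP0 Q y) T_lb. Qed.

Lemma PP_cvg : PP Q y @ \oo --> T0.
Proof.
have lb n : T0 - geometric (C2 Q * (1 - Q)^-1) Q n <= PP Q y n.
  have := T_ub n; rewrite Ts_const Ts_fin lee_fin /= => h.
  by rewrite lerBlDr mulrAC.
have ub n : PP Q y n <= T0.
  by have := T_lb n; rewrite Ts_const Ts_fin lee_fin.
apply: (@squeeze_cvgr _ _ _ _ (fun n => T0 - geometric (C2 Q * (1 - Q)^-1) Q n) (fun _ => T0)).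
- by apply: nearW => n; rewrite lb ub.
- rewrite -[X in _ --> X]subr0; apply: cvgB; first exact: cvg_cst.
  by apply: cvg_geometric; rewrite ger0_norm // ltW.
- exact: cvg_cst.
Qed.
End TT.

Lemma bin2_double n : ('C(n, 2) * 2 = n * n.-1)%N.
Proof.
elim: n => [|n IH] //; rewrite binS2 mulnDl IH.
by case: n {IH} => [|n] //=; rewrite !mulSn !mulnS; lia.
Qed.

Definition emap (p : int * nat) : nat * nat :=
  match p.1 with Posz m => (p.2, (p.2 + m)%N) | Negz j => ((p.2 + j.+1)%N, p.2) end.

Definition absz' (n : int) : nat := match n with Posz m => m | Negz j => j.+1 end.

Definition theta_t {R : realType} (Q z : R) (n : int) : R := Q ^ ((n * (n + 1)) %/ 2)%Z * z ^ n.

Lemma theta_pos (R : realType) (Q z : R) m : theta_t Q z (Posz m) = Q ^+ 'C(m.+1, 2) * z ^ (Posz m).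
Proof.
rewrite /theta_t.
have -> : Posz m + 1 = Posz m.+1 by rewrite -addn1 PoszD.
rewrite -PoszM divz_nat.
by rewrite -tri_bin subn1 /= mulnC.
Qed.

Lemma theta_neg (R : realType) (Q z : R) j : theta_t Q z (Negz j) = Q ^+ 'C(j.+1, 2) * z ^ (Negz j).
Proof.
rewrite /theta_t NegzE.
have -> : (- (Posz j.+1) * (- (Posz j.+1) + 1)) = Posz (j.+1 * (j.+1 - 1)).
  have -> : Posz j.+1 = Posz j + 1 by rewrite -addn1 PoszD.
  rewrite subn1 /= PoszM.
  have -> : Posz j.+1 = Posz j + 1 by rewrite -addn1 PoszD.
  ring.
by rewrite divz_nat tri_bin.
Qed.

Section PhiTheta.
Variables (R : realType) (Q z y : R).
Hypotheses (Q0 : 0 < Q) (Q1 : Q < 1) (z0 : 0 < z) (y0 : 0 < y) (y1 : y <= 1).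
Let Qn0 : Q != 0. Proof. by rewrite gt_eqF. Qed.
Let zn0 : z != 0. Proof. by rewrite gt_eqF. Qed.
Let yn0 : y != 0. Proof. by rewrite gt_eqF. Qed.

Lemma EE_S b : EE Q y b.+1 = y * Q ^+ b.+1 / (1 - Q ^+ b.+1) * PP Q y b.
Proof. by []. Qed.

Lemma caseB i m :
  Phi Q z y i.+1 (i.+1 + m) * EE Q y i.+1 * EE Q y (i.+1 + m) = theta_t Q z (Posz m) * ww Q y i.+1 m.
Proof.
have eE : EE Q y (i.+1 + m) = y * Q ^+ (i.+1 + m) / (1 - Q ^+ (i.+1 + m)) * PP Q y (i + m) by rewrite addSn.
rewrite eE EE_S theta_pos /Phi /ww /hh addnA.
have E1 : Q ^ (- (Posz i.+1) + 'C(i.+1, 2)%:Z) * Q ^ ('C(i.+1 + m, 2)%:Z) * Q ^+ i.+1 * Q ^+ (i.+1 + m) =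
          Q ^+ 'C(m.+1, 2) * Q ^+ (i.+1 * (i.+1 + m)).
  rewrite !exprnP -!expfzDr //; congr (Q ^ _).
  have h1 := bin2_double i.+1; have h2 := bin2D i.+1 m; have h3 := binS2 m.
  lia.
have Ez : z ^ (- (Posz i.+1)) * z ^ (Posz (i.+1 + m)) = z ^ (Posz m).
  by rewrite -expfzDr // PoszD addKr.
have D0 : Q ^+ (i.+1 * (i.+1 + m)) != 0 by rewrite expf_neq0.
have E1' : Q ^+ 'C(m.+1, 2) = Q ^ (- (Posz i.+1) + 'C(i.+1, 2)%:Z) * Q ^ ('C(i.+1 + m, 2)%:Z) * Q ^+ i.+1 * Q ^+ (i.+1 + m) / Q ^+ (i.+1 * (i.+1 + m)).
  by rewrite E1 mulfK.
rewrite E1' -Ez.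
have ha := oneQ_neq0 i Q0 Q1.
have hb : 1 - Q ^+ (i.+1 + m) != 0 by rewrite addSn oneQ_neq0.
move: D0 ha hb.
move: (Q ^ (- (Posz i.+1) + 'C(i.+1, 2)%:Z)) (Q ^ ('C(i.+1 + m, 2)%:Z)) (z ^ (- (Posz i.+1))) (z ^ (Posz (i.+1 + m))) => A B za zb.
move: (Q ^+ (i.+1 * (i.+1 + m))) (Q ^+ i.+1) (Q ^+ (i.+1 + m)) (Q ^+ (i.+1 + i.+1 + m)) => D a b X.
move=> D0 ha hb; field.
by rewrite D0 ha hb yn0.
Qed.

Lemma caseA m :
  Phi Q z y 0 m * EE Q y 0 * EE Q y m = theta_t Q z (Posz m) * ww Q y 0 m.
Proof.
rewrite theta_pos /Phi /ww /hh /= add0n !oppr0 !expr0z mulr1 !mul1r.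
case: m => [|j].
  by rewrite /= expr0 ?expr0z PP0 !mulr1 mul1r subrK.
rewrite EE_S PPS /gg (binS2 j.+1) exprD.
have ha := oneQ_neq0 j Q0 Q1.
have eq : Q ^ (Posz 'C(j.+1,2)) = Q ^+ 'C(j.+1, 2) by [].
rewrite eq.
move: ha; move: (Q ^+ j.+1) (Q ^+ 'C(j.+1, 2)) (z ^ (Posz j.+1)) => a c zz ha.
by field; rewrite ?ha ?yn0.
Qed.

Lemma caseC j :
  Phi Q z y (0 + j.+1) 0 * EE Q y (0 + j.+1) * EE Q y 0 = theta_t Q z (Negz j) * ww Q y 0 j.+1.
Proof.
rewrite theta_neg /Phi /ww /hh /= add0n addn0 expr0z mulr1 mul1r NegzE.
rewrite PPS /gg !expr0z mulr1.
have E1 : Q ^ (- (Posz j.+1) + 'C(j.+1, 2)%:Z) * Q ^+ j.+1 = Q ^+ 'C(j.+1, 2).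
  by rewrite !exprnP -!expfzDr // addrAC subrr add0r.
have E1' : Q ^ (- (Posz j.+1) + 'C(j.+1, 2)%:Z) = Q ^+ 'C(j.+1, 2) / Q ^+ j.+1.
  by rewrite -E1 mulfK // expf_neq0.
rewrite E1'.
have ha := oneQ_neq0 j Q0 Q1.
have hq : Q ^+ j.+1 != 0 by rewrite expf_neq0.
move: ha hq; move: (Q ^+ j.+1) (Q ^+ 'C(j.+1, 2)) (z ^ (- Posz j.+1)) => a c zz ha hq.
by field; rewrite ?ha ?hq ?yn0.
Qed.

Lemma caseD i j :
  Phi Q z y (i.+1 + j.+1) i.+1 * EE Q y (i.+1 + j.+1) * EE Q y i.+1 = theta_t Q z (Negz j) * ww Q y i.+1 j.+1.
Proof.
have eE : EE Q y (i.+1 + j.+1) = y * Q ^+ (i.+1 + j.+1) / (1 - Q ^+ (i.+1 + j.+1)) * PP Q y (i + j.+1) by rewrite addSn.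
have eX : (i.+1 + j.+1 + i.+1 = i.+1 + i.+1 + j.+1)%N by lia.
rewrite eE EE_S theta_neg /Phi /ww /hh eX.
have E1 : Q ^ (- (Posz (i.+1 + j.+1)) + 'C(i.+1 + j.+1, 2)%:Z) * Q ^ ('C(i.+1, 2)%:Z) * Q ^+ (i.+1 + j.+1) * Q ^+ i.+1 =
          Q ^+ 'C(j.+1, 2) * Q ^+ (i.+1 * (i.+1 + j.+1)).
  rewrite !exprnP -!expfzDr //; congr (Q ^ _).
  have h1 := bin2_double i.+1; have h2 := bin2D i.+1 j.+1.
  lia.
have Ez : z ^ (- (Posz (i.+1 + j.+1))) * z ^ (Posz i.+1) = z ^ (Negz j).
  by rewrite -expfzDr // NegzE PoszD; congr (z ^ _); ring.
have D0 : Q ^+ (i.+1 * (i.+1 + j.+1)) != 0 by rewrite expf_neq0.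
have E1' : Q ^+ 'C(j.+1, 2) = Q ^ (- (Posz (i.+1 + j.+1)) + 'C(i.+1 + j.+1, 2)%:Z) * Q ^ ('C(i.+1, 2)%:Z) * Q ^+ (i.+1 + j.+1) * Q ^+ i.+1 / Q ^+ (i.+1 * (i.+1 + j.+1)).
  by rewrite E1 mulfK.
rewrite E1' -Ez.
have ha := oneQ_neq0 i Q0 Q1.
have hb : 1 - Q ^+ (i.+1 + j.+1) != 0 by rewrite addSn oneQ_neq0.
move: D0 ha hb.
move: (Q ^ (- (Posz (i.+1 + j.+1)) + 'C(i.+1 + j.+1, 2)%:Z)) (Q ^ ('C(i.+1, 2)%:Z)) (z ^ (- (Posz (i.+1 + j.+1)))) (z ^ (Posz i.+1)) => A B za zb.
move: (Q ^+ (i.+1 * (i.+1 + j.+1))) (Q ^+ i.+1) (Q ^+ (i.+1 + j.+1)) (Q ^+ (i.+1 + i.+1 + j.+1)) => D a b X.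
move=> D0 ha hb; field.
by rewrite D0 ha hb yn0.
Qed.
End PhiTheta.

Lemma phi_theta (R : realType) (Q z y : R) n k : 0 < Q -> Q < 1 -> 0 < z -> 0 < y -> y <= 1 ->
  Phi Q z y (emap (n, k)).1 (emap (n, k)).2 * EE Q y (emap (n, k)).1 * EE Q y (emap (n, k)).2 =
  theta_t Q z n * ww Q y k (absz' n).
Proof.
move=> Q0 Q1 z0 y0 y1.
case: n => [m|j]; case: k => [|i]; rewrite /emap /=.
- by rewrite add0n caseA.
- by rewrite caseB.
- by rewrite caseC.
- by rewrite caseD.
Qed.

Lemma emap_bij : set_bij [set: int * nat] [set: nat * nat] emap.
Proof.
split.
- by [].
- move=> [[m|j] k] [[m'|j'] k'] _ _; rewrite /emap /=; case=> h1 h2.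
  + by congr (Posz _, _); lia.
  + lia.
  + lia.
  + by congr (Negz _, _); lia.
- move=> [a b] _; case: (leqP a b) => hab.
    by exists (Posz (b - a), a) => //; rewrite /emap /=; congr (_, _); lia.
  by exists (Negz (a - b).-1, b) => //; rewrite /emap /=; congr (_, _); lia.
Qed.

Unset Implicit Arguments. Set Strict Implicit.

Theorem theorem1p1 (R : realType) (Q z y : R) :
  0 < Q -> Q < 1 -> 0 < z -> 0 < y -> y <= 1 ->
  exists P : R, prod_partial Q y @ \oo --> P /\
    theta_lhs Q z = (Zfun Q z y * P%:E)%E.
Proof.
move=> Q0 Q1 z0 y0 y1.
have T1 : 1 <= T0 Q y by apply: T0_ge1.
have Tn0 : T0 Q y != 0 by rewrite gt_eqF // (lt_le_trans ltr01 T1).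
exists (T0 Q y)^-1; split.
  have -> : prod_partial Q y = (fun n => (PP Q y n)^-1).
    apply/funext => n; rewrite /prod_partial /PP -prodfV.
    by apply: eq_bigr => i _; rewrite /gg invf_div.
  exact: (cvgV Tn0 (PP_cvg Q0 Q1 y0 y1)).
have th0 n : 0 <= theta_t Q z n.
  by rewrite /theta_t mulr_ge0 // exprz_ge0 // ltW.
have ww0 k n : 0 <= ww Q y k n by apply: ww_ge0.
have HZ : Zfun Q z y = ((T0 Q y)%:E * theta_lhs Q z)%E.
  rewrite Zfun_ZI0 // esum_ZI0 //.
  rewrite (reindex_esum [set: int * nat] [set: nat * nat] emap _ emap_bij).
  have -> : [set: int * nat] = [set: int] `*`` (fun _ => [set: nat]).
    by apply/seteqP; split.
  rewrite -(@esum_esum R _ _ [set: int] (fun _ => [set: nat])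
     (fun n k => (Phi Q z y (emap (n, k)).1 (emap (n, k)).2 * EE Q y (emap (n, k)).1 * EE Q y (emap (n, k)).2)%:E)); last first.
    move=> n k _ _; rewrite phi_theta // lee_fin mulr_ge0 //.
  rewrite /theta_lhs -(@esumZ _ _ _ (fun m => (Q ^ ((m * (m + 1)) %/ 2)%Z * z ^ m)%:E)); last 2 first.
  - exact: le_trans ler01 T1.
  - by move=> m; rewrite lee_fin; exact: th0.
  apply: eq_esum => n _.
  rewrite (@eq_esum _ _ _ _ (fun k => ((theta_t Q z n)%:E * (ww Q y k (absz' n))%:E)%E)); last first.
    by move=> k _; rewrite phi_theta // EFinM.
  rewrite (@esumZ _ _ _ (fun k => (ww Q y k (absz' n))%:E)) //; last by move=> k; rewrite lee_fin.
  rewrite -nneseries_esumT; last by move=> k; rewrite lee_fin.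
  rewrite -/(Ts Q y (absz' n)) Ts_const // Ts_fin //.
  by rewrite -!EFinM mulrC.
by rewrite HZ muleC muleA -EFinM mulVf // mul1e.
Qed.
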